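(* Let $\mathcal{T}$ be a countable directed poset, $X:\mathcal{T}\to\mathbf{Set}_*$ a diagram of pointed sets satisfying the Mittag-Leffler condition, and $A$ an abelian group. Then: (1) If $A$ is $p$-divisible for a prime $p$, then $G(X,A)$ and $H(X,A)$ are $p$-divisible. (2) If $A$ is divisible, then $G(X,A)$ and $H(X,A)$ are divisible. (3) If $A$ is almost divisible, then $G(X,A)$ and $H(X,A)$ are almost divisible.
   Context: A directed poset is regarded as a category with a single morphism $t\to s$ whenever $t\ge s$. For a pointed set $Y$, $Y\wedge A:=\bigoplus_{Y\setminus\{*\}}A$ (finitely supported pointed maps $Y\to A$), functorial via $f_*(sv)=f(s)v$, where $sv$ is the element with value $v$ at $s$ ($*v=0$). $G(X,A):=\lim_\mathcal{T}(X\wedge A)$; $K(X,A)$ is the image of the injective natural map $\rho:(\lim_\mathcal{T}X)\wedge A\to G(X,A)$, $\rho(xv)(t)=x(t)v$; $H(X,A):=G(X,A)/K(X,A)$. $X$ satisfies the Mittag-Leffler condition if for every $t$ there is $s\ge t$ with $\mathrm{Im}(X(s)\to X(t))=\mathrm{Im}(X(r)\to X(t))$ for all $r\ge s$. An abelian group is almost divisible iff it is the direct sum of a divisible group and a bounded group (equivalently, $l_p(A)=0$ for almost all primes $p$ and $l_p(A)<\omega$ for all primes $p$, where $l_p$ is the $p$-length). *)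

(* Defs.v *)
From HB Require Import structures.
From mathcomp Require Import all_boot all_order all_algebra.
From mathcomp Require Import boolp classical_sets functions.
From Stdlib Require List.
Set Implicit Arguments. Unset Strict Implicit. Unset Printing Implicit Defensive.
Import Order.TTheory GRing.Theory.
Local Open Scope ring_scope.

(* Subquotients P/K of an abelian group V (P, K subgroups, K <= P),   *)
(* described through predicates on V.                                 *)
Definition subgrp (V : zmodType) (P : V -> Prop) :=
  P 0 /\ forall x y, P x -> P y -> P (x - y).

Definition sq_ndiv (V : zmodType) (n : nat) (P K : V -> Prop) :=
  forall g, P g -> exists h, P h /\ K (g - h *+ n).

Definition sq_div (V : zmodType) (P K : V -> Prop) :=
  forall n : nat, (0 < n)%N -> sq_ndiv n P K.

Definition sq_bounded (V : zmodType) (P K : V -> Prop) :=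
  exists n : nat, (0 < n)%N /\ forall g, P g -> K (g *+ n).

(* P/K is almost divisible: P/K = D/K (+) B/K (internal direct sum)
   with D/K divisible and B/K bounded. *)
Definition sq_almost_div (V : zmodType) (P K : V -> Prop) :=
  exists D B : V -> Prop,
    subgrp D /\ subgrp B /\
    (forall x, K x -> D x /\ B x) /\
    (forall x, D x -> P x) /\ (forall x, B x -> P x) /\
    (forall g, P g -> exists d b, [/\ D d, B b & g = d + b]) /\
    (forall x, D x -> B x -> K x) /\
    sq_div D K /\ sq_bounded B K.

(* The same notions for an abelian group A itself (A = A / 0). *)
Definition whole (V : zmodType) : V -> Prop := fun _ => True.
Definition zero_sg (V : zmodType) : V -> Prop := fun x => x = 0.

Definition p_divisible (A : zmodType) (p : nat) := sq_ndiv p (@whole A) (@zero_sg A).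
Definition divisible (A : zmodType) := sq_div (@whole A) (@zero_sg A).
Definition almost_divisible (A : zmodType) := sq_almost_div (@whole A) (@zero_sg A).

Definition countable_type (T : Type) := exists c : T -> nat, injective c.

Definition directed (d : Order.disp_t) (T : porderType d) :=
  inhabited T /\ forall s t : T, exists r : T, (s <= r)%O /\ (t <= r)%O.

(* A diagram X : T -> Set_* ; one morphism t -> s whenever t >= s, so
   f t s h : X t -> X s for h : s <= t.  Pointed sets are eqTypes with a
   distinguished point pt t. *)
Definition pointed_diagram (d : Order.disp_t) (T : porderType d)
  (X : T -> eqType) (pt : forall t, X t)
  (f : forall t s : T, (s <= t)%O -> X t -> X s) :=
  [/\ (forall t s (h : (s <= t)%O), f t s h (pt t) = pt s),
      (forall t (h : (t <= t)%O) x, f t t h x = x) &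
      (forall t r s (h1 : (r <= t)%O) (h2 : (s <= r)%O) (h3 : (s <= t)%O) x,
          f r s h2 (f t r h1 x) = f t s h3 x)].

Definition image_of (Y Z : Type) (h : Y -> Z) : Z -> Prop :=
  fun z => exists y, h y = z.

Definition mittag_leffler (d : Order.disp_t) (T : porderType d)
  (X : T -> eqType) (f : forall t s : T, (s <= t)%O -> X t -> X s) :=
  forall t : T, exists s : T, exists hst : (t <= s)%O,
    forall (r : T) (hsr : (s <= r)%O) (htr : (t <= r)%O) (y : X t),
      image_of (f r t htr) y <-> image_of (f s t hst) y.

(* Y /\ A : finitely supported pointed maps Y -> A, and pushforward     *)
Definition fin_supp (Y : eqType) (A : zmodType) (g : Y -> A) :=
  exists s : seq Y, forall y, g y != 0 -> y \in s.

Definition smash_elt (Y : eqType) (y0 : Y) (A : zmodType) (g : Y -> A) :=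
  g y0 = 0 /\ fin_supp g.

Definition pushes (Y Z : eqType) (A : zmodType) (h : Y -> Z) (z0 : Z)
  (g : Y -> A) (g' : Z -> A) :=
  forall s : seq Y, uniq s -> (forall y, g y != 0 -> y \in s) ->
    forall z, g' z = if z == z0 then 0 else \sum_(y <- s | h y == z) g y.

(* Elements of prod_t (X t /\ A) are encoded as functions {t & X t} -> A. *)
Definition comp_at (d : Order.disp_t) (T : porderType d) (X : T -> eqType)
  (A : zmodType) (g : {t : T & X t} -> A) (t : T) : X t -> A :=
  fun y => g (existT _ t y).
Arguments comp_at {d T X A} g t _.

(* G(X,A) = lim_T (X /\ A) *)
Definition G_pred (d : Order.disp_t) (T : porderType d)
  (X : T -> eqType) (pt : forall t, X t)
  (f : forall t s : T, (s <= t)%O -> X t -> X s) (A : zmodType)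
  (g : {t : T & X t} -> A) : Prop :=
  (forall t, smash_elt (pt t) (comp_at g t)) /\
  (forall t s (h : (s <= t)%O),
      pushes (f t s h) (pt s) (comp_at g t) (comp_at g s)).

Definition lim_elt (d : Order.disp_t) (T : porderType d)
  (X : T -> eqType) (f : forall t s : T, (s <= t)%O -> X t -> X s)
  (x : forall t, X t) : Prop :=
  forall t s (h : (s <= t)%O), f t s h (x t) = x s.

(* K(X,A) = image of rho : (lim X) /\ A -> G(X,A); an element of
   (lim X) /\ A is a finite formal sum sum_i x_i v_i, and
   rho(sum_i x_i v_i)(t) = sum_i x_i(t) v_i  (with *v = 0). *)
Definition K_pred (d : Order.disp_t) (T : porderType d)
  (X : T -> eqType) (pt : forall t, X t)
  (f : forall t s : T, (s <= t)%O -> X t -> X s) (A : zmodType)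
  (g : {t : T & X t} -> A) : Prop :=
  G_pred pt f g /\
  exists l : seq ((forall t, X t) * A),
    (forall i, List.In i l -> lim_elt f i.1) /\
    forall t (y : X t),
      comp_at g t y = if y == pt t then 0
                      else \sum_(i <- l | i.1 t == y) i.2.

(* Main.v *)
Require Import Defs.
From HB Require Import structures.
From mathcomp Require Import all_boot all_order all_algebra.
From mathcomp Require Import boolp classical_sets functions.
Import Order.TTheory GRing.Theory.
Local Open Scope ring_scope.
Set Implicit Arguments. Unset Strict Implicit. Unset Printing Implicit Defensive.

Lemma fmuln (T : Type) (A : zmodType) (g : T -> A) n x : (g *+ n) x = g x *+ n.
Proof. elim: n => [|n IH]; first by []. by rewrite !mulrS -IH. Qed.

Section Push.
Variables (A : zmodType).

Definition covers (Y : eqType) (g : Y -> A) (s : seq Y) :=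
  uniq s /\ forall y, g y != 0 -> y \in s.

Definition psum (Y Z : eqType) (h : Y -> Z) (z0 : Z) (s : seq Y) (g : Y -> A) : Z -> A :=
  fun z => if z == z0 then 0 else \sum_(y <- s | h y == z) g y.

Lemma sum_indep (Y : eqType) (g : Y -> A) s1 s2 (P : pred Y) :
  covers g s1 -> covers g s2 ->
  \sum_(y <- s1 | P y) g y = \sum_(y <- s2 | P y) g y.
Proof.
have E : forall s, \sum_(y <- s | P y) g y =
    \sum_(y <- filter (fun y => g y != 0) s | P y) g y.
  move=> s; rewrite big_filter_cond big_mkcondl; apply: eq_bigr => y _.
  by case: eqP => // ->.
move=> [u1 c1] [u2 c2]; rewrite (E s1) (E s2); apply: perm_big.
apply: uniq_perm; rewrite ?filter_uniq // => y; rewrite !mem_filter.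
by case: (boolP (g y != 0)) => //= /[dup] /c1 -> /c2 ->.
Qed.

Lemma psum_indep (Y Z : eqType) (h : Y -> Z) z0 (g : Y -> A) s1 s2 :
  covers g s1 -> covers g s2 -> psum h z0 s1 g = psum h z0 s2 g.
Proof.
by move=> c1 c2; apply/funext => z; rewrite /psum (sum_indep _ c1 c2).
Qed.

Lemma pushesP (Y Z : eqType) (h : Y -> Z) z0 (g : Y -> A) g' s :
  covers g s -> (pushes h z0 g g' <-> g' = psum h z0 s g).
Proof.
move=> cs; split.
  by case: cs => u c P; apply/funext => z; rewrite (P s u c).
move=> -> s' u' c'; have cs' : covers g s' by [].
by move=> z; rewrite (psum_indep _ _ cs cs').
Qed.

Lemma covers_undup (Y : eqType) (g : Y -> A) s :
  (forall y, g y != 0 -> y \in s) -> covers g (undup s).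
Proof. by move=> c; split; [apply: undup_uniq | move=> y /c; rewrite mem_undup]. Qed.

Lemma fin_covers (Y : eqType) (g : Y -> A) : fin_supp g -> exists s, covers g s.
Proof. by case=> s c; exists (undup s); apply: covers_undup. Qed.

Lemma sum_ne0 (I : Type) (r : seq I) (P : pred I) (F : I -> A) :
  \sum_(i <- r | P i) F i != 0 -> exists2 i, List.In i r & P i /\ F i != 0.
Proof.
elim: r => [|i r IH]; first by rewrite big_nil eqxx.
rewrite big_cons; case: (boolP (P i)) => Pi /=; last first.
  by move=> /IH [j jr Pj]; exists j => //; right.
case: (boolP (F i != 0)) => Fi; first by move=> _; exists i => //; left.
rewrite negbK in Fi; rewrite (eqP Fi) add0r => /IH [j jr Pj]; exists j => //; by right.
Qed.

Lemma psum_supp (Y Z : eqType) (h : Y -> Z) z0 (g : Y -> A) s z :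
  psum h z0 s g z != 0 -> z != z0 /\ exists y, [/\ y \in s, h y = z & g y != 0].
Proof.
rewrite /psum; case: (boolP (z == z0)) => [_|zz]; first by rewrite eqxx.
move=> /sum_ne0 [y ys [/eqP hy gy]]; split => //.
exists y; split => //; elim: s ys {hy gy} => //= a s IH [->|/IH]; rewrite inE ?eqxx //.
by move=> ->; rewrite orbT.
Qed.

Lemma psum_covers (Y Z : eqType) (h : Y -> Z) z0 (g : Y -> A) s :
  covers (psum h z0 s g) (undup (map h s)).
Proof.
apply: covers_undup => z /psum_supp [_ [y [ys <- _]]]; exact: map_f.
Qed.

Lemma psum_pt (Y Z : eqType) (h : Y -> Z) z0 (g : Y -> A) s :
  psum h z0 s g z0 = 0.
Proof. by rewrite /psum eqxx. Qed.

Lemma sum_single (I : eqType) (U : seq I) x (K : I -> A) :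
  uniq U -> x \in U -> \sum_(z <- U) (if x == z then K z else 0) = K x.
Proof.
move=> uU xU; rewrite (big_rem x) //= eqxx big1_seq ?addr0 //.
move=> z /andP [_]; rewrite (mem_rem_uniq _ uU) inE => /andP [zx _].
by rewrite eq_sym (negbTE zx).
Qed.

Lemma psum_comp (Y Z W : eqType) (a : Z -> W) (b : Y -> Z) z0 w0 (g : Y -> A) s :
  a z0 = w0 ->
  psum a w0 (undup (map b s)) (psum b z0 s g) = psum (a \o b) w0 s g.
Proof.
move=> az; apply/funext => w; rewrite /psum; case: eqP => // /eqP ww.
rewrite big_mkcond.
transitivity (\sum_(z <- undup (map b s)) \sum_(y <- s)
   (if b y == z then (if (a z == w) && (z != z0) then g y else 0) else 0)).
  apply: eq_bigr => z _; case: (a z == w) => //=; last by rewrite big1 // => y _; case: ifP.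
  case: eqP => _ /=; first by rewrite big1 // => y _; case: ifP.
  by rewrite big_mkcond; apply: eq_bigr => y _; rewrite eq_sym.
rewrite exchange_big /= [RHS]big_mkcond; apply: eq_big_seq => y ys.
rewrite (sum_single (I:=Z) (x:=b y) (fun z => if (a z == w) && (z != z0) then g y else 0))
  ?undup_uniq ?mem_undup ?map_f //=.
case: (boolP (a (b y) == w)) => //= /eqP abw.
case: eqP => // byz; case/eqP: ww; by rewrite -abw byz az.
Qed.

Definition addf2 (F : A -> A -> A) :=
  forall a1 a2 b1 b2, F (a1 + a2) (b1 + b2) = F a1 b1 + F a2 b2.

Lemma addf2_0 F : addf2 F -> F 0 0 = 0.
Proof.
move=> FF.
have : F 0 0 + F 0 0 - F 0 0 = F 0 0 by rewrite addrK. by rewrite -{1}FF addr0 subrr. 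
Qed.

Lemma sumF F (I : Type) (r : seq I) (P : pred I) (a b : I -> A) :
  addf2 F ->
  \sum_(i <- r | P i) F (a i) (b i) = F (\sum_(i <- r | P i) a i) (\sum_(i <- r | P i) b i).
Proof.
move=> FF; elim: r => [|i r IH]; first by rewrite !big_nil addf2_0.
by rewrite !big_cons; case: (P i) => //; rewrite FF IH.
Qed.

Lemma psumF F (Y Z : eqType) (h : Y -> Z) z0 (g1 g2 : Y -> A) s :
  addf2 F ->
  psum h z0 s (fun y => F (g1 y) (g2 y)) = fun z => F (psum h z0 s g1 z) (psum h z0 s g2 z).
Proof.
move=> FF; apply/funext => z; rewrite /psum; case: eqP; first by rewrite addf2_0.
by rewrite sumF.
Qed.

End Push.

Section GK.
Variables (d : Order.disp_t) (T : porderType d) (X : T -> eqType) (pt : forall t, X t)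
  (f : forall t s : T, (s <= t)%O -> X t -> X s) (A : zmodType).

Local Notation GP := (G_pred pt f (A:=A)).
Local Notation KP := (K_pred pt f (A:=A)).

Lemma covers2 (Y : eqType) (g1 g2 : Y -> A) : fin_supp g1 -> fin_supp g2 ->
  exists s, [/\ covers g1 s, covers g2 s &
     forall F, addf2 F -> covers (fun y => F (g1 y) (g2 y)) s].
Proof.
move=> [s1 c1] [s2 c2]; exists (undup (s1 ++ s2)); split.
- by apply: covers_undup => y /c1; rewrite mem_cat => ->.
- by apply: covers_undup => y /c2; rewrite mem_cat => ->; rewrite orbT.
move=> F FF; apply: covers_undup => y; rewrite mem_cat.
case: (boolP (g1 y != 0)) => [/c1 -> //|]; rewrite negbK => /eqP ->.
case: (boolP (g2 y != 0)) => [/c2 -> //|]; first by rewrite orbT.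
by rewrite negbK => /eqP ->; rewrite addf2_0 // eqxx.
Qed.

Lemma G_closeF F g1 g2 : addf2 F -> GP g1 -> GP g2 -> GP (fun x => F (g1 x) (g2 x)).
Proof.
move=> FF [s1 p1] [s2 p2]; split.
  move=> t; case: (s1 t) => z1 fs1; case: (s2 t) => z2 fs2; split.
    by rewrite /comp_at /= -/(comp_at g1 t _) -/(comp_at g2 t _) z1 z2 addf2_0.
  by case: (covers2 fs1 fs2) => s [_ _ /(_ F FF) [_ c]]; exists s.
move=> t s h; case: (s1 t) => _ fs1; case: (s2 t) => _ fs2.
case: (covers2 fs1 fs2) => U [cU1 cU2 /(_ F FF) cUF].
apply/(pushesP _ _ _ cUF).
rewrite (psumF _ _ _ _ _ FF).
have E1 : comp_at g1 s = psum (@f t s h) (pt s) U (comp_at g1 t) by apply/(pushesP _ _ _ cU1).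
have E2 : comp_at g2 s = psum (@f t s h) (pt s) U (comp_at g2 t) by apply/(pushesP _ _ _ cU2).
by rewrite -E1 -E2.
Qed.

Lemma G0 : GP 0.
Proof.
split.
  by move=> t; split => //; exists [::] => y; rewrite eqxx.
move=> t s h; have c : covers (comp_at (0 : {t : T & X t} -> A) t) [::] by split => // y; rewrite eqxx.
apply/(pushesP _ _ _ c); apply/funext => z; rewrite /psum big_nil; case: ifP => //.
Qed.

Lemma KG g : KP g -> GP g.
Proof. by case. Qed.

Lemma K_closeF F g1 g2 : addf2 F -> KP g1 -> KP g2 -> KP (fun x => F (g1 x) (g2 x)).
Proof.
move=> FF [G1 [l1 [L1 E1]]] [G2 [l2 [L2 E2]]]; split; first exact: G_closeF.
exists ([seq (i.1, F i.2 0) | i <- l1] ++ [seq (i.1, F 0 i.2) | i <- l2]); split.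
  move=> i; rewrite List.in_app_iff !List.in_map_iff.
  by case=> [[j [<- /L1]]|[j [<- /L2]]].
move=> t y; rewrite /comp_at /= -/(comp_at g1 t _) -/(comp_at g2 t _) E1 E2.
case: eqP => _; first by rewrite addf2_0.
rewrite big_cat !big_map /=.
rewrite -[\sum_(i <- l1 | _) _]addr0 -[\sum_(i <- l2 | _) _]add0r FF.
congr (_ + _).
  rewrite (sumF _ _ _ _ FF); congr F; by rewrite big1.
rewrite (sumF _ _ _ _ FF); congr F; by rewrite big1.
Qed.

Lemma K0 : KP 0.
Proof.
split; first exact: G0.
by exists [::]; split => // t y; rewrite big_nil; case: ifP.
Qed.

End GK.

Section Abstract.
Variable V : zmodType.

Lemma sg0 (P : V -> Prop) : subgrp P -> P 0.
Proof. by case. Qed.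
Lemma sgB (P : V -> Prop) x y : subgrp P -> P x -> P y -> P (x - y).
Proof. by case=> _ H; apply: H. Qed.
Lemma sgN (P : V -> Prop) x : subgrp P -> P x -> P (- x).
Proof. by move=> sP Px; rewrite -sub0r; apply: sgB => //; apply: sg0. Qed.
Lemma sgD (P : V -> Prop) x y : subgrp P -> P x -> P y -> P (x + y).
Proof. by move=> sP Px Py; rewrite -[y]opprK; apply: sgB => //; apply: sgN. Qed.
Lemma sgMn (P : V -> Prop) x n : subgrp P -> P x -> P (x *+ n).
Proof.
move=> sP Px; elim: n => [|n IH]; first by rewrite mulr0n; apply: sg0.
by rewrite mulrS; apply: sgD.
Qed.

Lemma abs_ad (G K : V -> Prop) (pD : V -> V) :
  subgrp G -> subgrp K -> (forall x, K x -> G x) ->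
  (forall x, G x -> G (pD x)) ->
  (forall x y, pD (x - y) = pD x - pD y) ->
  (forall x, pD (pD x) = pD x) ->
  (forall x, K x -> K (pD x)) ->
  (forall m, (0 < m)%N -> forall x, G x -> pD x = x ->
      exists h, [/\ G h, pD h = h & x = h *+ m]) ->
  (exists n, (0 < n)%N /\ forall x, G x -> pD x = 0 -> x *+ n = 0) ->
  sq_almost_div G K.
Proof.
move=> sG sK KG GD addD idD KD divD [n [n0 bndB]].
have pD0 : pD 0 = 0 by move: (addD 0 0); rewrite !subrr.
exists (fun x => exists a k, [/\ G a, pD a = a, K k & x = a + k]).
exists (fun x => exists b k, [/\ G b, pD b = 0, K k & x = b + k]).
split.
  split; first by exists 0, 0; rewrite addr0; split => //; apply: sg0.
  move=> x y [a1 [k1 [Ga1 Da1 Kk1 ->]]] [a2 [k2 [Ga2 Da2 Kk2 ->]]].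
  exists (a1 - a2), (k1 - k2); split; try by apply: sgB.
    by rewrite addD Da1 Da2.
  by rewrite opprD addrACA.
split.
  split; first by exists 0, 0; rewrite addr0; split => //; apply: sg0.
  move=> x y [a1 [k1 [Ga1 Da1 Kk1 ->]]] [a2 [k2 [Ga2 Da2 Kk2 ->]]].
  exists (a1 - a2), (k1 - k2); split; try by apply: sgB.
    by rewrite addD Da1 Da2 subrr.
  by rewrite opprD addrACA.
split.
  move=> x Kx; split; exists 0, x; rewrite add0r; split => //; exact: sg0.
split.
  by move=> x [a [k [Ga _ Kk ->]]]; apply: sgD => //; apply: KG.
split.
  by move=> x [a [k [Ga _ Kk ->]]]; apply: sgD => //; apply: KG.
split.
  move=> g Gg; exists (pD g + 0), (g - pD g + 0); split.
  - by exists (pD g), 0; split => //; [apply: GD | apply: sg0].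
  - exists (g - pD g), 0; split => //.
    + by apply: sgB => //; apply: GD.
    + by rewrite addD idD subrr.
    + exact: sg0.
  - by rewrite !addr0 addrC subrK.
split.
  move=> x [a [k1 [Ga Da Kk1 ->]]] [b [k2 [Gb Db Kk2 E]]].
  have E2 : a - b = k2 - k1.
    have Ea : a = b + (k2 - k1) by rewrite addrA -E addrK.
    by rewrite Ea addrC addKr.
  have : pD (a - b) = pD (k2 - k1) by rewrite E2.
  rewrite addD Da Db subr0 => ->; apply: sgD => //; apply: KD; exact: sgB.
split.
  move=> m m0 x [a [k [Ga Da Kk ->]]].
  case: (divD m m0 a Ga Da) => h [Gh Dh ah]; exists h; split.
    by exists h, 0; rewrite addr0; split => //; apply: sg0.
  by rewrite ah addrAC subrr add0r.
exists n; split => // x [b [k [Gb Db Kk ->]]].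
by rewrite mulrnDl bndB // add0r; apply: sgMn.
Qed.

End Abstract.

Section PushMore.
Variable A : zmodType.

Lemma pushes_uniq (Y Z : eqType) (a : Y -> Z) z0 (g : Y -> A) g1 g2 :
  fin_supp g -> pushes a z0 g g1 -> pushes a z0 g g2 -> g1 = g2.
Proof.
move=> /fin_covers [s c] /(pushesP _ _ _ c) -> /(pushesP _ _ _ c) -> //.
Qed.

Lemma pushes_ext (Y Z : eqType) (a b : Y -> Z) z0 (g : Y -> A) g' :
  (forall x, a x = b x) -> pushes a z0 g g' -> pushes b z0 g g'.
Proof. by move=> /funext ->. Qed.

Lemma pushes_comp (Y Z W : eqType) (a : Z -> W) (b : Y -> Z) z0 w0 (g : Y -> A) g1 g2 :
  a z0 = w0 -> fin_supp g -> pushes b z0 g g1 -> pushes a w0 g1 g2 ->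
  pushes (a \o b) w0 g g2.
Proof.
move=> az /fin_covers [s c] /(pushesP _ _ _ c) E1.
rewrite E1 (pushesP _ _ _ (psum_covers _ _ _ _)) => ->.
by apply/(pushesP _ _ _ c); rewrite psum_comp.
Qed.

Definition cov (Y : eqType) (g : Y -> A) : seq Y :=
  match pselect (exists s, covers g s) with
  | left P => projT1 (cid P) | right _ => [::] end.

Lemma covP (Y : eqType) (g : Y -> A) : fin_supp g -> covers g (cov g).
Proof.
move=> /fin_covers P; rewrite /cov; case: pselect => // Q.
exact: (projT2 (cid Q)).
Qed.

Definition push (Y Z : eqType) (a : Y -> Z) z0 (g : Y -> A) := psum a z0 (cov g) g.

Lemma pushP (Y Z : eqType) (a : Y -> Z) z0 (g : Y -> A) :
  fin_supp g -> pushes a z0 g (push a z0 g).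
Proof. by move=> /covP c; apply/(pushesP _ _ _ c). Qed.

Lemma psum_fin (Y Z : eqType) (a : Y -> Z) z0 (g : Y -> A) s : fin_supp (psum a z0 s g).
Proof. by case: (psum_covers a z0 g s) => _ c; exists (undup (map a s)). Qed.

Lemma pushes_fin (Y Z : eqType) (a : Y -> Z) z0 (g : Y -> A) g' :
  fin_supp g -> pushes a z0 g g' -> fin_supp g'.
Proof. by move=> /fin_covers [s c] /(pushesP _ _ _ c) ->; apply: psum_fin. Qed.

Lemma pushes_pt (Y Z : eqType) (a : Y -> Z) z0 (g : Y -> A) g' :
  fin_supp g -> pushes a z0 g g' -> g' z0 = 0.
Proof. by move=> /fin_covers [s c] /(pushesP _ _ _ c) ->; apply: psum_pt. Qed.

Lemma sum_in (S : A -> Prop) (I : Type) (r : seq I) (P : pred I) F :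
  subgrp S -> (forall i, S (F i)) -> S (\sum_(i <- r | P i) F i).
Proof.
move=> sS SF; elim: r => [|i r IH]; first by rewrite big_nil; apply: sg0.
by rewrite big_cons; case: (P i) => //; apply: sgD.
Qed.

Lemma psum_in (S : A -> Prop) (Y Z : eqType) (a : Y -> Z) z0 (g : Y -> A) s z :
  subgrp S -> (forall y, S (g y)) -> S (psum a z0 s g z).
Proof. by move=> sS Sg; rewrite /psum; case: ifP => _; [apply: sg0 | apply: sum_in]. Qed.

End PushMore.

Section Core.
Variables (d : Order.disp_t) (T : porderType d) (X : T -> eqType) (pt : forall t, X t)
  (f : forall t s : T, (s <= t)%O -> X t -> X s) (A : zmodType).
Hypotheses (cT : countable_type T) (dT : directed T) (pdX : pointed_diagram pt f)
  (mlX : mittag_leffler f).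

Lemma f_irr t s (h1 h2 : (s <= t)%O) x : f h1 x = f h2 x.
Proof. by rewrite (bool_irrelevance h1 h2). Qed.

Lemma f_comp t r s (h1 : (r <= t)%O) (h2 : (s <= r)%O) (h3 : (s <= t)%O) x :
  f h2 (f h1 x) = f h3 x.
Proof. by case: pdX => _ _ ->. Qed.

Lemma f_pt t s (h : (s <= t)%O) : f h (pt t) = pt s.
Proof. by case: pdX => ->. Qed.

Lemma f_id t (h : (t <= t)%O) x : f h x = x.
Proof. by case: pdX => _ ->. Qed.

Definition ub (s t : T) : T := projT1 (cid (dT.2 s t)).
Lemma ub_l s t : (s <= ub s t)%O. Proof. by case: (projT2 (cid (dT.2 s t))). Qed.
Lemma ub_r s t : (t <= ub s t)%O. Proof. by case: (projT2 (cid (dT.2 s t))). Qed.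

Lemma exT : exists t : T, True. Proof. by case: dT => [[t]] _; exists t. Qed.
Definition t0 : T := projT1 (cid exT).

Definition cnt : T -> nat := projT1 (cid cT).
Lemma cnt_inj : injective cnt. Proof. exact: (projT2 (cid cT)). Qed.

Definition enum_t (n : nat) : T :=
  match pselect (exists t, cnt t = n) with
  | left P => projT1 (cid P) | right _ => t0 end.
Lemma enum_tE t : enum_t (cnt t) = t.
Proof.
rewrite /enum_t; case: pselect => [P|[]]; last by exists t.
by apply: cnt_inj; exact: (projT2 (cid P)).
Qed.

Definition mlS (t : T) : T := projT1 (cid (mlX t)).
Lemma mlS_ge t : (t <= mlS t)%O.
Proof. by case: (projT2 (cid (mlX t))). Qed.
Lemma mlS_P t (r : T) (hsr : (mlS t <= r)%O) (htr : (t <= r)%O) (y : X t) :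
  image_of (f htr) y <-> image_of (f (mlS_ge t)) y.
Proof.
case: (projT2 (cid (mlX t))) => hst P; rewrite (P r hsr htr y).
by rewrite (bool_irrelevance hst (mlS_ge t)).
Qed.

Fixpoint u (n : nat) : T :=
  match n with 0 => t0 | n'.+1 => ub (ub (u n') (mlS (u n'))) (enum_t n') end.

Lemma u_step n : (u n <= u n.+1)%O.
Proof. by rewrite /=; apply: le_trans (ub_l _ _) (ub_l _ _). Qed.
Lemma u_ml n : (mlS (u n) <= u n.+1)%O.
Proof. by rewrite /=; apply: le_trans (ub_r _ _) (ub_l _ _). Qed.
Lemma u_mono n k : (n <= k)%N -> (u n <= u k)%O.
Proof.
move=> nk; rewrite -(subnK nk); elim: (k - n)%N => [|j IH] //=.
exact: le_trans IH (u_step _).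
Qed.
Lemma u_cof t : exists n, (t <= u n)%O.
Proof. by exists (cnt t).+1; rewrite /= -{1}(enum_tE t); apply: ub_r. Qed.

Definition Yst n : X (u n) -> Prop := image_of (f (@u_step n)).

Lemma stab n r (h1 : (u n.+1 <= r)%O) (h : (u n <= r)%O) y :
  image_of (f h) y <-> Yst y.
Proof.
rewrite (mlS_P (le_trans (@u_ml n) h1)) /Yst.
by rewrite (mlS_P (@u_ml n) (@u_step n)).
Qed.

Lemma Y_surj n (y : X (u n)) : Yst y -> exists z : X (u n.+1), Yst z /\ f (@u_step n) z = y.
Proof.
have h1 : (u n.+1 <= u n.+2)%O by apply: u_step.
have h : (u n <= u n.+2)%O by apply: le_trans (u_step _) h1.
move=> /(stab h1 h) [w <-]; exists (f (@u_step n.+1) w); split; first by exists w.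
exact: f_comp.
Qed.


Lemma addf2_sub (B : zmodType) : addf2 (fun a b : B => a - b).
Proof. by move=> a1 a2 b1 b2; rewrite opprD addrACA. Qed.

Lemma addf2_mul (B : zmodType) k : addf2 (fun a _ : B => a *+ k).
Proof. by move=> a1 a2 b1 b2; rewrite mulrnDl. Qed.

Variables (S : A -> Prop) (m : nat) (g : {t : T & X t} -> A).
Hypotheses (sS : subgrp S) (divS : sq_ndiv m S (@zero_sg A)) (Gg : G_pred pt f g)
  (Sg : forall x, S (g x)).

Definition gn n : X (u n) -> A := comp_at g (u n).
Arguments gn n : clear implicits.

Lemma g_push n : pushes (f (@u_step n)) (pt (u n)) (gn n.+1) (gn n).
Proof. by case: Gg => _ P; apply: P. Qed.
Lemma g_fin n : fin_supp (gn n).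
Proof. by case: Gg => P _; case: (P (u n)). Qed.
Lemma g_pt n : gn n (pt (u n)) = 0.
Proof. by case: Gg => P _; case: (P (u n)). Qed.

Lemma supp_Y n (y : X (u n)) : gn n y != 0 -> Yst y.
Proof.
case: (fin_covers (@g_fin n.+1)) => s c.
have := @g_push n; move/(pushesP _ _ _ c) => ->.
by move=> /psum_supp [_ [z [_ E _]]]; exists z.
Qed.

Definition dv (a : A) : A :=
  match pselect (exists b, S b /\ a - b *+ m = 0) with
  | left P => if a == 0 then 0 else projT1 (cid P) | right _ => 0 end.

Lemma dv0 : dv 0 = 0.
Proof. by rewrite /dv; case: pselect => // P; rewrite eqxx. Qed.

Lemma dvP a : S a -> S (dv a) /\ dv a *+ m = a.
Proof.
move=> Sa; rewrite /dv; case: pselect => [P|[]]; last first.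
  by case: (divS Sa) => b [Sb zb]; exists b.
case: eqP => [->|_]; first by rewrite mul0rn; split => //; apply: sg0.
case: (projT2 (cid P)) => Sb /eqP; rewrite subr_eq0 => /eqP E; split => //.
Qed.

Definition Inv n (h : X (u n) -> A) : Prop :=
  [/\ h (pt (u n)) = 0, fin_supp h, forall y, h y != 0 -> Yst y,
      forall y, S (h y) & forall y, h y *+ m = gn n y].
Arguments Inv n h : clear implicits.

Lemma dvInv n : Inv n (fun y => dv (gn n y)).
Proof.
split.
- by rewrite /= g_pt dv0.
- case: (@g_fin n) => s c; exists s => y H; apply: c; apply: contraNneq H => ->.
  by rewrite dv0.
- move=> y H; apply: supp_Y; apply: contraNneq H => ->; by rewrite dv0.
- by move=> y; case: (dvP (Sg (existT _ (u n) y))).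
- by move=> y; case: (dvP (Sg (existT _ (u n) y))).
Qed.

Definition sig n (y : X (u n)) : X (u n.+1) :=
  match pselect (exists z : X (u n.+1), Yst z /\ f (@u_step n) z = y) with
  | left P => projT1 (cid P) | right _ => pt _ end.

Lemma sigP n (y : X (u n)) : Yst y -> Yst (sig y) /\ f (@u_step n) (sig y) = y.
Proof.
move=> /Y_surj P; rewrite /sig; case: pselect => // Q.
exact: (projT2 (cid Q)).
Qed.

Lemma covers_mul (Y : eqType) (h g' : Y -> A) s :
  covers h s -> (forall y, h y *+ m = g' y) -> covers g' s.
Proof.
move=> [us c] E; split => // y H; apply: c; apply: contraNneq H => H0.
by rewrite -E H0 mul0rn.
Qed.


Lemma lift n (h : X (u n) -> A) : Inv n h ->
  exists h' : X (u n.+1) -> A, Inv n.+1 h' /\ pushes (f (@u_step n)) (pt (u n)) h' h.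
Proof.
move=> [h0 hfin hY hS hm].
have [k0 kfin kY kS km] := @dvInv n.+1.
set k := fun y => dv (gn n.+1 y) in k0 kfin kY kS km *.
set F := f (@u_step n).
set pk := psum F (pt (u n)) (cov k) k.
have ck := covP kfin.
have pkP : pushes F (pt (u n)) k pk by apply/(pushesP _ _ _ ck).
set e := fun y => pk y - h y.
have e0 : e (pt (u n)) = 0 by rewrite /e /pk psum_pt h0 subrr.
have efin : fin_supp e.
  case: (covers2 (psum_fin F (pt (u n)) k (cov k)) hfin) => s [_ _ /(_ _ (@addf2_sub A)) [_ c]].
  by exists s.
have eY : forall y, e y != 0 -> Yst y.
  move=> y; case: (boolP (pk y != 0)) => [/psum_supp [_ [z [_ E _]]] _|]; first by exists z.
  by rewrite negbK /e => /eqP ->; rewrite sub0r oppr_eq0; apply: hY.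
have eS : forall y, S (e y) by move=> y; apply: sgB => //; apply: psum_in.
have em : forall y, e y *+ m = 0.
  move=> y; rewrite /e mulrnBl hm.
  have -> : pk y *+ m = psum F (pt (u n)) (cov k) (fun z => k z *+ m) y.
    by rewrite (psumF _ _ _ k _ (@addf2_mul A m)).
  have -> : (fun z => k z *+ m) = gn n.+1 by apply/funext => z; apply: km.
  have := @g_push n; move/(pushesP _ _ _ (covers_mul ck km)) => <-.
  by rewrite subrr.
have ce := covP efin.
set L' := [seq y <- cov e | e y != 0].
have L'P : forall y, (y \in L') = (e y != 0).
  move=> y; rewrite mem_filter; case: (boolP (e y != 0)) => //= /(proj2 ce) //.
have uL : uniq (map (@sig n) L').
  rewrite map_inj_in_uniq; first by rewrite /L' filter_uniq //; case: ce.
  move=> x y; rewrite !L'P => /eY /sigP [_ Ex] /eY /sigP [_ Ey] E.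
  by rewrite -Ex -Ey E.
set e' := fun z => if z \in map (@sig n) L' then e (F z) else 0.
have e'0 : e' (pt (u n.+1)) = 0.
  rewrite /e'; case: ifP => // /mapP [y]; rewrite L'P => H E.
  have [_ Fy] := sigP (eY _ H).
  move: H; rewrite -Fy -E /F f_pt => /eqP; by [].
have ce' : covers e' (map (@sig n) L').
  by split => // z; rewrite /e'; case: ifP => //; rewrite eqxx.
have e'fin : fin_supp e' by case: ce' => _ c; exists (map (@sig n) L').
have e'Y : forall z, e' z != 0 -> Yst z.
  move=> z /(proj2 ce') /mapP [y]; rewrite L'P => /eY /sigP [H _] -> //.
have e'S : forall z, S (e' z) by move=> z; rewrite /e'; case: ifP => _ //; apply: sg0.
have e'm : forall z, e' z *+ m = 0 by move=> z; rewrite /e'; case: ifP => _ //; rewrite mul0rn.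
have e'P : pushes F (pt (u n)) e' e.
  apply/(pushesP _ _ _ ce'); apply/funext => y; rewrite /psum.
  case: eqP => [->|_]; first by [].
  rewrite big_map.
  transitivity (\sum_(x <- L' | x == y) e x).
    symmetry; case: (boolP (y \in L')) => yL.
      rewrite big_mkcond (eq_bigr (fun x => if y == x then e x else 0)).
        rewrite (sum_single (U:=L') (x:=y)) //; rewrite /L' filter_uniq //; by case: ce.
      by move=> x _; rewrite eq_sym.
    rewrite big1_seq; first by move: yL; rewrite L'P negbK => /eqP.
    by move=> x /andP [/eqP -> H]; move: yL; rewrite H.
  rewrite [LHS]big_seq_cond [RHS]big_seq_cond; apply: eq_big => x.
    case: (boolP (x \in L')) => //= xL.
    by rewrite /F; have [_ ->] := sigP (eY _ (eq_ind _ _ xL _ (L'P x))).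
  move=> /andP [xL _]; rewrite /e' map_f //.
  by rewrite /F; have [_ ->] := sigP (eY _ (eq_ind _ _ xL _ (L'P x))).
exists (fun z => k z - e' z); split.
  split.
  - by rewrite /= /k k0 e'0 subrr.
  - case: (covers2 kfin e'fin) => s [_ _ /(_ _ (@addf2_sub A)) [_ c]].
    by exists s.
  - move=> z H; case: (boolP (k z != 0)) => [/kY //|]; rewrite negbK => /eqP K0.
    by apply: e'Y; move: H; rewrite K0 sub0r oppr_eq0.
  - by move=> z; apply: sgB => //; apply: kS.
  - by move=> z; rewrite mulrnBl km e'm subr0.
case: (covers2 kfin e'fin) => U [cUk cUe' /(_ _ (@addf2_sub A)) cU].
apply/(pushesP _ _ _ cU); rewrite (psumF _ _ _ _ _ (@addf2_sub A)).
rewrite -(psum_indep _ _ ck cUk) -/pk -(proj1 (pushesP _ _ _ cUe') e'P).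
by apply/funext => y; rewrite /e opprB addrC subrK.
Qed.


Lemma pushes_id (Y : eqType) (y0 : Y) (h : Y -> A) :
  h y0 = 0 -> fin_supp h -> pushes id y0 h h.
Proof.
move=> h0 /fin_covers [s c]; apply/(pushesP _ _ _ c); apply/funext => y.
rewrite /psum; case: eqP => [->//|_].
case: (boolP (y \in s)) => ys.
  rewrite big_mkcond (eq_bigr (fun x => if y == x then h x else 0)).
    by rewrite (sum_single (U:=s) (x:=y)) //; case: c.
  by move=> x _; rewrite eq_sym.
rewrite big1_seq; first by apply/eqP; apply: contraNT ys => /(proj2 c).
by move=> x /andP [/eqP -> H]; move: ys; rewrite H.
Qed.

Definition step n (h : X (u n) -> A) : X (u n.+1) -> A :=
  match pselect (exists h', Inv n.+1 h' /\ pushes (f (@u_step n)) (pt (u n)) h' h) with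
  | left P => projT1 (cid P) | right _ => fun _ => 0 end.

Fixpoint H n : X (u n) -> A :=
  match n as n0 return X (u n0) -> A with
  | 0 => fun y => dv (gn 0 y)
  | n'.+1 => @step n' (@H n') end.
Arguments H n : clear implicits.

Lemma H_inv_push n : Inv n (H n) /\ pushes (f (@u_step n)) (pt (u n)) (H n.+1) (H n).
Proof.
have IH : forall n, Inv n (H n).
  elim=> [|k IH]; first exact: (@dvInv 0).
  rewrite /= /step; case: pselect => [P|[]]; last exact: lift.
  by case: (projT2 (cid P)).
split => //; rewrite /= /step; case: pselect => [P|[]]; last exact: lift.
by case: (projT2 (cid P)).
Qed.

Lemma H_chain j n (h : (u n <= u (j + n))%O) : pushes (f h) (pt (u n)) (H (j + n)) (H n).
Proof.
elim: j h => [|j IH] h.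
  have [[h0 hf _ _ _] _] := H_inv_push n.
  apply: (pushes_ext (a := id)); first by move=> x; rewrite f_id.
  exact: pushes_id.
have h' : (u n <= u (j + n))%O by apply: u_mono; apply: leq_addl.
have [[_ hf _ _ _] P] := H_inv_push (j + n).
have [[_ hf1 _ _ _] _] := H_inv_push (j + n).+1.
have := pushes_comp (f_pt h') hf1 P (IH h').
by apply: pushes_ext => x /=; apply: f_comp.
Qed.

Lemma H_le n k (nk : (n <= k)%N) (h : (u n <= u k)%O) :
  pushes (f h) (pt (u n)) (H k) (H n).
Proof. by move: h; rewrite -(subnK nk) => h; apply: H_chain. Qed.

Definition Nt t := projT1 (cid (u_cof t)).
Lemma NP t : (t <= u (Nt t))%O. Proof. exact: (projT2 (cid (u_cof t))). Qed.

Definition Pt t : X t -> A := push (f (NP t)) (pt t) (H (Nt t)).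
Arguments Pt t : clear implicits.

Lemma H_fin n : fin_supp (H n).
Proof. by have [[_ ? _ _ _] _] := H_inv_push n. Qed.

Lemma hkey t n (h : (t <= u n)%O) : pushes (f h) (pt t) (H n) (Pt t).
Proof.
set M := maxn n (Nt t).
have hn : (u n <= u M)%O by apply: u_mono; apply: leq_maxl.
have hN : (u (Nt t) <= u M)%O by apply: u_mono; apply: leq_maxr.
have hM : (t <= u M)%O by apply: le_trans h hn.
have P1 : pushes (f hM) (pt t) (H M) (Pt t).
  have := pushes_comp (f_pt (NP t)) (H_fin M) (H_le (leq_maxr _ _) hN)
    (pushP (f (NP t)) (pt t) (H_fin (Nt t))).
  by apply: pushes_ext => x /=; apply: f_comp.
have P2 : pushes (f hM) (pt t) (H M) (push (f h) (pt t) (H n)).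
  have := pushes_comp (f_pt h) (H_fin M) (H_le (leq_maxl _ _) hn)
    (pushP (f h) (pt t) (H_fin n)).
  by apply: pushes_ext => x /=; apply: f_comp.
rewrite -(pushes_uniq (H_fin M) P2 P1); exact: pushP (H_fin n).
Qed.

Definition hfun : {t : T & X t} -> A := fun p => Pt (projT1 p) (projT2 p).

Lemma G_h : G_pred pt f hfun.
Proof.
split.
  move=> t; split; first by apply: psum_pt.
  rewrite /comp_at /hfun /= /Pt /push; exact: psum_fin.
move=> t s h; change (pushes (f h) (pt s) (Pt t) (Pt s)).
case: (u_cof t) => n ht.
have hs : (s <= u n)%O by apply: le_trans h ht.
have P1 := hkey hs.
have fPt : fin_supp (Pt t) by apply: psum_fin.
have P2 : pushes (f hs) (pt s) (H n) (push (f h) (pt s) (Pt t)).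
  have := pushes_comp (f_pt h) (H_fin n) (hkey ht) (pushP (f h) (pt s) fPt).
  by apply: pushes_ext => x /=; apply: f_comp.
rewrite -(pushes_uniq (H_fin n) P2 P1); exact: pushP.
Qed.

Lemma h_S x : S (hfun x).
Proof.
apply: psum_in => // y; by have [[_ _ _ ? _] _] := H_inv_push (Nt (projT1 x)).
Qed.

Lemma h_mul : g = hfun *+ m.
Proof.
apply/funext => [[t y]]; rewrite fmuln /hfun /= /Pt /push.
set N := Nt t.
have [[_ hf _ _ hm] _] := H_inv_push N.
have c := covP hf.
rewrite -[psum _ _ _ _ y *+ m]/((fun y => psum (f (NP t)) (pt t) (cov (H N)) (H N) y *+ m) y).
rewrite -(psumF _ _ _ (H N) _ (@addf2_mul A m)).
have -> : (fun z => H N z *+ m) = gn N by apply/funext => z; apply: hm.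
have := (proj2 Gg) _ _ (NP t).
move/(pushesP _ _ _ (covers_mul c hm)) => <- //.
Qed.

Lemma core_div : exists h, [/\ G_pred pt f h, forall x, S (h x) & g = h *+ m].
Proof. exists hfun; split; [exact: G_h | exact: h_S | exact: h_mul]. Qed.

End Core.

Lemma sub4 (A : zmodType) (x y z w : A) : x - y - (z - w) = (x - z) - (y - w).
Proof. by rewrite !opprB addrACA [RHS]addrACA (addrC (- y)). Qed.

Section Proj.
Variables (A : zmodType) (DA BA : A -> Prop).
Hypotheses (sD : subgrp DA) (sB : subgrp BA)
  (dec : forall a : A, exists d b, [/\ DA d, BA b & a = d + b])
  (DB0 : forall x, DA x -> BA x -> zero_sg x).

Lemma dec' a : exists d, DA d /\ BA (a - d).
Proof. by case: (dec a) => d [b [Dd Bb ->]]; exists d; rewrite addrC addKr. Qed.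

Definition pi (a : A) : A := projT1 (cid (dec' a)).
Lemma piD a : DA (pi a). Proof. by case: (projT2 (cid (dec' a))). Qed.
Lemma piB a : BA (a - pi a). Proof. by case: (projT2 (cid (dec' a))). Qed.

Lemma pi_uniq a d : DA d -> BA (a - d) -> pi a = d.
Proof.
move=> Dd Bd; apply/eqP; rewrite -subr_eq0; apply/eqP; apply: DB0.
  by apply: sgB => //; apply: piD.
have -> : pi a - d = (a - d) - (a - pi a) by rewrite opprB [RHS]addrC addrA subrK.
by apply: sgB => //; apply: piB.
Qed.

Lemma pi_sub a b : pi (a - b) = pi a - pi b.
Proof.
apply: pi_uniq; first by apply: sgB => //; apply: piD.
have -> : a - b - (pi a - pi b) = (a - pi a) - (b - pi b).
  by rewrite sub4.
by apply: sgB => //; apply: piB.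
Qed.

Lemma pi0 : pi 0 = 0. Proof. by move: (pi_sub 0 0); rewrite !subrr. Qed.

Lemma pi_add a b : pi (a + b) = pi a + pi b.
Proof.
have piN c : pi (- c) = - pi c by rewrite -sub0r pi_sub pi0 sub0r.
by rewrite -{1}[b]opprK pi_sub piN opprK.
Qed.

Lemma addf2_pi : addf2 (fun a _ => pi a).
Proof. by move=> a1 a2 b1 b2; rewrite pi_add. Qed.

Lemma pi_fix a : DA a -> pi a = a.
Proof. by move=> Da; apply: pi_uniq => //; rewrite subrr; apply: sg0. Qed.

Lemma pi_pi a : pi (pi a) = pi a.
Proof. exact/pi_fix/piD. Qed.

Lemma pi_zero a : pi a = 0 -> BA a.
Proof. by move=> E; have := piB a; rewrite E subr0. Qed.

End Proj.
Unset Implicit Arguments.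

Theorem mainTheorem14 (d : Order.disp_t) (T : porderType d)
  (X : T -> eqType) (pt : forall t, X t)
  (f : forall t s : T, (s <= t)%O -> X t -> X s) (A : zmodType) :
  countable_type T -> directed T -> pointed_diagram pt f ->
  mittag_leffler f ->
  [/\ (forall p : nat, prime p -> p_divisible A p ->
         sq_ndiv p (G_pred pt f (A:=A)) (@zero_sg _) /\
         sq_ndiv p (G_pred pt f (A:=A)) (K_pred pt f (A:=A))),
      (divisible A ->
         sq_div (G_pred pt f (A:=A)) (@zero_sg _) /\
         sq_div (G_pred pt f (A:=A)) (K_pred pt f (A:=A))) &
      (almost_divisible A ->
         sq_almost_div (G_pred pt f (A:=A)) (@zero_sg _) /\
         sq_almost_div (G_pred pt f (A:=A)) (K_pred pt f (A:=A)))].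
Proof.
move=> cT dT pdX mlX.
have sW : subgrp (@whole A) by [].
have ndiv : forall m, sq_ndiv m (@whole A) (@zero_sg A) ->
    sq_ndiv m (G_pred pt f (A:=A)) (@zero_sg _) /\
    sq_ndiv m (G_pred pt f (A:=A)) (K_pred pt f (A:=A)).
  move=> m dm; split => g Gg.
    have [h [Gh _ ->]] := core_div cT dT pdX mlX sW dm Gg (fun _ => I).
    by exists h; split => //; rewrite /zero_sg subrr.
  have [h [Gh _ ->]] := core_div cT dT pdX mlX sW dm Gg (fun _ => I).
  by exists h; split => //; rewrite subrr; apply: K0.
have subG : subgrp (G_pred pt f (A:=A)).
  split; first exact: G0.
  move=> x y Gx Gy; exact: (G_closeF (@addf2_sub A) Gx Gy).
have subK : subgrp (K_pred pt f (A:=A)).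
  split; first exact: K0.
  move=> x y Kx Ky; exact: (K_closeF (@addf2_sub A) Kx Ky).
have subZ : subgrp (@zero_sg ({t : T & X t} -> A)).
  by split => // x y -> ->; rewrite subrr.
split.
- move=> p _ pd; exact: ndiv.
- by move=> dA; split => n n0; have [] := ndiv n (dA n n0).
move=> [DA [BA [sD [sB [_ [_ [_ [dec [DB0 [divDA [n [n0 bndB]]]]]]]]]]]].
have dec' : forall a : A, exists d b, [/\ DA d, BA b & a = d + b].
  by move=> a; apply: dec.
set pD := fun g : {t : T & X t} -> A => fun x => pi dec' (g x).
have GD : forall g, G_pred pt f g -> G_pred pt f (pD g).
  by move=> g Gg; exact: (G_closeF (addf2_pi sD sB dec' DB0) Gg Gg).
have addD : forall x y, pD (x - y) = pD x - pD y.
  by move=> x y; apply/funext => z; rewrite /pD /= (pi_sub sD sB dec' DB0).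
have idD : forall x, pD (pD x) = pD x.
  by move=> x; apply/funext => z; rewrite /pD /= (pi_pi sD sB dec' DB0).
have divD : forall m, (0 < m)%N -> forall x, G_pred pt f x -> pD x = x ->
    exists h, [/\ G_pred pt f h, pD h = h & x = h *+ m].
  move=> m m0 x Gx Ex.
  have Sx : forall z, DA (x z).
    move=> z; have := congr1 (fun F => F z) Ex; rewrite /pD /= => <-; apply: piD.
  have [h [Gh Sh ->]] := core_div cT dT pdX mlX sD (divDA m m0) Gx Sx.
  exists h; split => //; apply/funext => z; rewrite /pD /=; exact: (pi_fix sD sB dec' DB0).
have bnd : exists n, (0 < n)%N /\ forall x, G_pred pt f x -> pD x = 0 -> x *+ n = 0.
  exists n; split => // x _ Ex; apply/funext => z; rewrite fmuln.
  apply: bndB; apply: (pi_zero (dec:=dec')).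
  by have := congr1 (fun F => F z) Ex.
split.
  apply: (abs_ad subG subZ _ GD addD idD _ divD bnd).
    by move=> x ->; apply: G0.
  by move=> x ->; apply/funext => z; rewrite /pD /= (pi0 sD sB dec' DB0).
apply: (abs_ad subG subK _ GD addD idD _ divD bnd).
  exact: KG.
by move=> x Kx; exact: (K_closeF (addf2_pi sD sB dec' DB0) Kx Kx).
Qed.
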